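(* $\mathcal M_\infty\subset\mathcal M_{-\infty}$.
   Context: Standing assumptions: $H$ is a real Hilbert space with norm $|\cdot|$. $A$ is a linear, closed, unbounded, positive self-adjoint operator on $H$ with compact inverse, so $H$ has an orthonormal basis of eigenvectors of $A$ with eigenvalues $0<\lambda_1<\lambda_2\le\cdots\le\lambda_N<\lambda_{N+1}\le\cdots\to\infty$ (counted with multiplicity). $F:H\to H$ satisfies $|F(u)|\le K_0$ and $|F(u)-F(v)|\le K_1|u-v|$ for all $u,v\in H$, with constants $K_0,K_1>0$ and $K_1<\lambda_{N+1}$; moreover there is $R>0$ with $F(u)=0$ whenever $|u|\ge R$. $P$ is the orthogonal (spectral) projection onto the span of the first $N$ eigenvectors of $A$, and $Q=I-P$; points of $H$ are identified with pairs $(p,q)\in PH\times QH$. A solution on an interval $J$ means a continuous function satisfying the variation of constants formula $u(t)=e^{-A(t-s)}u(s)+\int_s^t e^{-A(t-\tau)}F(u(\tau))\,d\tau$ for all $s\le t$ in $J$. For $t>0$, $\mathcal M_t=\{u(t): u \text{ is a solution of } u_t+Au=F(u) \text{ on } [0,t] \text{ with } Pu(0)\in PH \text{ arbitrary and } Qu(0)=0\}$. $\mathcal M_\infty$ is the set of all $(p_\infty,q_\infty)\in H$ for which there exist integers $n_1<n_2<\cdots$ and points $(p_{n_k},q_{n_k})\in\mathcal M_{n_k}$ with $(p_{n_k},q_{n_k})\to(p_\infty,q_\infty)$ in $H$. $\mathcal M_{-\infty}$ is the set of all $(p_0,q_0)\in H$ such that there is a solution $u(t)=p(t)+q(t)$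 of $u_t+Au=F(u)$ on $(-\infty,0]$ with $p(0)=p_0$, $q(0)=q_0$ and $q(t)=Qu(t)$ bounded on $(-\infty,0]$ (the backward bounded solutions). *)

(* Defs.v *)
(* Concrete model: H = l^2(nat) (real square-summable sequences), where the
   k-th coordinate is the coefficient along the (k+1)-th eigenvector of A,
   and A acts diagonally with eigenvalues lam k (lam 0 = lambda_1, ...). *)
From Stdlib Require Import Reals Lra.
From Coquelicot Require Import Coquelicot.
Open Scope R_scope.

Definition vec := nat -> R.

Definition l2 (x : vec) : Prop := ex_series (fun k => (x k) ^ 2).

Definition nrm (x : vec) : R := sqrt (Series (fun k => (x k) ^ 2)).

Definition vdist (x y : vec) : R := nrm (fun k => x k - y k).

Definition Pproj (N : nat) (x : vec) : vec := fun k => if (k <? N)%nat then x k else 0.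
Definition Qproj (N : nat) (x : vec) : vec := fun k => if (k <? N)%nat then 0 else x k.

Definition H_continuous_on (J : R -> Prop) (u : R -> vec) : Prop :=
  (forall t, J t -> l2 (u t)) /\
  (forall t, J t -> forall eps, 0 < eps -> exists delta, 0 < delta /\
     forall s, J s -> Rabs (s - t) < delta -> vdist (u s) (u t) < eps).

(* mild solution of u_t + A u = F(u) on J: continuous and satisfying the
   variation of constants formula; e^{-A t} is diagonal (e^{-lam k t}), and
   the H-valued integral is taken coordinatewise. *)
Definition mild_solution (lam : nat -> R) (F : vec -> vec) (J : R -> Prop)
  (u : R -> vec) : Prop :=
  H_continuous_on J u /\
  forall s t, J s -> J t -> s <= t -> forall k,
    u t k = exp (- lam k * (t - s)) * u s k
            + RInt (fun tau => exp (- lam k * (t - tau)) * F (u tau) k) s t.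

Definition M_t (lam : nat -> R) (F : vec -> vec) (N : nat) (t : R) (x : vec) : Prop :=
  exists u : R -> vec,
    mild_solution lam F (fun s => 0 <= s <= t) u /\
    Qproj N (u 0) = (fun _ => 0) /\
    x = u t.

Definition M_inf (lam : nat -> R) (F : vec -> vec) (N : nat) (x : vec) : Prop :=
  l2 x /\
  exists (n : nat -> nat) (xs : nat -> vec),
    (0 < n 0)%nat /\ (forall j, (n j < n (S j))%nat) /\
    (forall j, M_t lam F N (INR (n j)) (xs j)) /\
    is_lim_seq (fun j => vdist (xs j) x) 0.

Definition M_minf (lam : nat -> R) (F : vec -> vec) (N : nat) (x : vec) : Prop :=
  exists u : R -> vec,
    mild_solution lam F (fun s => s <= 0) u /\
    u 0 = x /\
    exists C, forall t, t <= 0 -> nrm (Qproj N (u t)) <= C.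

(* Main.v *)
Require Import Defs.
From Stdlib Require Import Reals Lra Lia ClassicalEpsilon Classical FunctionalExtensionality Cantor.
From Coquelicot Require Import Coquelicot.
Open Scope R_scope.

Fixpoint fsum (a : nat -> R) (n : nat) : R :=
  match n with O => 0 | S n' => fsum a n' + a n' end.

Lemma fsum_ext a b n : (forall k, (k < n)%nat -> a k = b k) -> fsum a n = fsum b n.
Proof. induction n; simpl; intros H; [lra|]. rewrite IHn by (intros; apply H; lia). rewrite H by lia. lra. Qed.

Lemma fsum_le a b n : (forall k, (k < n)%nat -> a k <= b k) -> fsum a n <= fsum b n.
Proof. induction n; simpl; intros H; [lra|]. assert (fsum a n <= fsum b n) by (apply IHn; intros; apply H; lia). specialize (H n ltac:(lia)). lra. Qed.

Lemma fsum_nonneg a n : (forall k, 0 <= a k) -> 0 <= fsum a n.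
Proof. induction n; simpl; intros H; [lra|]. specialize (IHn H). specialize (H n). lra. Qed.

Lemma fsum_mono a n m : (forall k, 0 <= a k) -> (n <= m)%nat -> fsum a n <= fsum a m.
Proof. intros H Hnm. induction Hnm; [lra|]. simpl. specialize (H m). lra. Qed.

Lemma fsum_plus a b n : fsum (fun k => a k + b k) n = fsum a n + fsum b n.
Proof. induction n; simpl; lra. Qed.

Lemma fsum_scal c a n : fsum (fun k => c * a k) n = c * fsum a n.
Proof. induction n; simpl; [lra|]. rewrite IHn. ring. Qed.

Lemma fsum_const c n : fsum (fun _ => c) n = INR n * c.
Proof. induction n; simpl fsum; [simpl; lra|]. rewrite IHn, S_INR. ring. Qed.

Lemma term_le_fsum a k : (forall i, 0 <= a i) -> a k <= fsum a (S k).
Proof. intros H. simpl. pose proof (fsum_nonneg a k H). lra. Qed.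

Lemma sum_n_fsum a n : sum_n a n = fsum a (S n).
Proof. induction n. rewrite sum_O. simpl. lra. rewrite sum_Sn, IHn. simpl. reflexivity. Qed.

Lemma Un_cv_le u l B N : Un_cv u l -> (forall n, (N <= n)%nat -> u n <= B) -> l <= B.
Proof.
  intros Hc Hb. destruct (Rle_dec l B) as [|Hn]; [auto|]. exfalso.
  destruct (Hc (l - B)) as [M HM]; [lra|].
  specialize (HM (Nat.max N M) ltac:(lia)). specialize (Hb (Nat.max N M) ltac:(lia)).
  unfold Rdist in HM. apply Rabs_lt_between in HM. lra.
Qed.

Lemma Un_cv_ge u l B N : Un_cv u l -> (forall n, (N <= n)%nat -> B <= u n) -> B <= l.
Proof.
  intros Hc Hb. destruct (Rle_dec B l) as [|Hn]; [auto|]. exfalso.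
  destruct (Hc (B - l)) as [M HM]; [lra|].
  specialize (HM (Nat.max N M) ltac:(lia)). specialize (Hb (Nat.max N M) ltac:(lia)).
  unfold Rdist in HM. apply Rabs_lt_between in HM. lra.
Qed.

Lemma fsum_le_Series a n : (forall k, 0 <= a k) -> ex_series a -> fsum a n <= Series a.
Proof.
  intros H Hex. destruct n. simpl. 
  - assert (0 <= Series a). { apply Series_correct in Hex.
      pose proof (is_lim_seq_incr_compare (sum_n a) (Series a) Hex).
      assert (sum_n a 0 <= Series a). apply H0. intros m. rewrite sum_Sn. unfold plus; simpl. specialize (H (S m)). lra.
      rewrite sum_O in H1. specialize (H 0%nat). lra. } lra.
  - rewrite <- sum_n_fsum. apply Series_correct in Hex.
    apply (is_lim_seq_incr_compare (sum_n a) (Series a) Hex).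
    intros m. rewrite sum_Sn. unfold plus; simpl. specialize (H (S m)). lra.
Qed.

Lemma ser_bound a B : (forall k, 0 <= a k) -> (forall n, fsum a n <= B) -> ex_series a /\ Series a <= B.
Proof.
  intros H Hb.
  assert (Hg : Un_growing (sum_n a)). { intros m. rewrite sum_Sn. unfold plus; simpl. specialize (H (S m)). lra. }
  assert (Hu : has_ub (sum_n a)). { exists B. intros x [m ->]. rewrite sum_n_fsum. apply Hb. }
  destruct (growing_cv _ Hg Hu) as [l Hl].
  assert (Hs : is_series a l). { apply is_lim_seq_Reals in Hl. exact Hl. }
  split. exists l. exact Hs.
  rewrite (is_series_unique a l Hs). apply (Un_cv_le _ _ B 0 Hl). intros m _. rewrite sum_n_fsum. apply Hb.
Qed.


Lemma l2_sub a b : l2 a -> l2 b -> l2 (fun k => a k - b k).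
Proof.
  intros Ha Hb. unfold l2 in *.
  apply (@ex_series_le R_AbsRing R_CompleteNormedModule _ (fun k => (a k)^2 * 2 + (b k)^2 * 2)).
  - intros n. change (norm ((a n - b n)^2)) with (Rabs ((a n - b n)^2)). rewrite Rabs_right. 2: { apply Rle_ge. apply pow2_ge_0. }
    pose proof (pow2_ge_0 (a n + b n)). nra.
  - apply (@ex_series_plus R_AbsRing R_NormedModule (fun k => (a k)^2 * 2) (fun k => (b k)^2 * 2)); apply (ex_series_scal_r 2); auto.
Qed.

Lemma Series_sq_nonneg a : 0 <= Series (fun k => (a k)^2).
Proof.
  destruct (classic (ex_series (fun k => (a k)^2))) as [H|H].
  - pose proof (fsum_le_Series (fun k => (a k)^2) 0 (fun k => pow2_ge_0 _) H). exact H0.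
  - unfold Series. destruct (ex_lim_seq_incr (sum_n (fun k => (a k)^2))) as [l Hl].
    { intros m. rewrite sum_Sn. unfold plus; simpl. pose proof (pow2_ge_0 (a (S m))). lra. }
    rewrite (is_lim_seq_unique _ _ Hl). destruct l as [l| |]; simpl; try lra.
    + exfalso. apply H. exists l. exact Hl.
Qed.

Lemma nrm_sq a : (nrm a)^2 = Series (fun k => (a k)^2).
Proof. unfold nrm. rewrite pow2_sqrt; auto. apply Series_sq_nonneg. Qed.

Lemma nrm_nonneg a : 0 <= nrm a.
Proof. apply sqrt_pos. Qed.

Lemma fsum_le_nrm2 a n : l2 a -> fsum (fun k => (a k)^2) n <= (nrm a)^2.
Proof. intros H. rewrite nrm_sq. apply fsum_le_Series; auto. intros; apply pow2_ge_0. Qed.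



Lemma abs_le_of_sq x y : 0 <= y -> x^2 <= y^2 -> Rabs x <= y.
Proof.
  intros Hy H. destruct (Rle_dec (Rabs x) y); auto. exfalso.
  assert (y < Rabs x) by lra. assert (y^2 < (Rabs x)^2) by nra.
  rewrite pow2_abs in H1. lra.
Qed.

Lemma coord_le_nrm a k : l2 a -> Rabs (a k) <= nrm a.
Proof.
  intros H. apply abs_le_of_sq. apply nrm_nonneg.
  eapply Rle_trans. apply (term_le_fsum (fun k => (a k)^2) k). intros; apply pow2_ge_0.
  apply fsum_le_nrm2; auto.
Qed.

Lemma coord_le_vdist a b k : l2 a -> l2 b -> Rabs (a k - b k) <= vdist a b.
Proof. intros Ha Hb. unfold vdist. apply (coord_le_nrm (fun k => a k - b k)). apply l2_sub; auto. Qed.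

Lemma nrm_le_of_fsum a C : 0 <= C -> (forall n, fsum (fun k => (a k)^2) n <= C^2) -> l2 a /\ nrm a <= C.
Proof.
  intros HC H. destruct (ser_bound _ _ (fun k => pow2_ge_0 (a k)) H) as [Hex Hs].
  split; auto. unfold nrm. rewrite <- (sqrt_pow2 C HC). apply sqrt_le_1_alt. exact Hs.
Qed.

Lemma nrm_lt_of_fsum a B C : 0 < C -> B < C^2 -> (forall n, fsum (fun k => (a k)^2) n <= B) -> l2 a /\ nrm a < C.
Proof.
  intros HC HB H.
  assert (HB0 : 0 <= B). { specialize (H 0%nat). simpl in H. lra. }
  destruct (ser_bound _ _ (fun k => pow2_ge_0 (a k)) H) as [Hex Hs].
  split; auto. unfold nrm. rewrite <- (sqrt_pow2 C) by lra. apply sqrt_lt_1_alt. split.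
  apply Series_sq_nonneg. lra.
Qed.


Definition clamp (a b x : R) : R := Rmax a (Rmin b x).

Lemma clamp_lip a b x y : a <= b -> Rabs (clamp a b x - clamp a b y) <= Rabs (x - y).
Proof. intros H. unfold clamp, Rmax, Rmin. repeat destruct Rle_dec; apply Rabs_le_between'; unfold Rabs; destruct Rcase_abs; lra. Qed.
Lemma clamp_in a b x : a <= b -> a <= clamp a b x <= b.
Proof. intros H. unfold clamp, Rmax, Rmin. repeat destruct Rle_dec; lra. Qed.
Lemma clamp_id a b x : a <= x <= b -> clamp a b x = x.
Proof. intros H. unfold clamp, Rmax, Rmin. repeat destruct Rle_dec; lra. Qed.

Definition wcont (a b : R) (g : R -> R) : Prop :=
  forall t, a <= t <= b -> forall eps, 0 < eps -> exists delta, 0 < delta /\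
    forall s, a <= s <= b -> Rabs (s - t) < delta -> Rabs (g s - g t) < eps.

Lemma wcont_clamp a b g : a <= b -> wcont a b g -> forall x, continuous (fun t => g (clamp a b t)) x.
Proof.
  intros Hab Hg x. apply continuity_pt_filterlim.
  unfold continuity_pt, continue_in, limit1_in, limit_in. intros eps Heps. simpl. unfold R_dist.
  destruct (Hg (clamp a b x) (clamp_in a b x Hab) eps Heps) as [d [Hd H]].
  exists d. split; [lra|]. intros y [_ Hy]. apply H. apply clamp_in; auto.
  eapply Rle_lt_trans. apply clamp_lip; auto. exact Hy.
Qed.

Lemma cont_explin l t x : continuous (fun s => exp (- l * (t - s))) x.
Proof. apply (@ex_derive_continuous R_AbsRing R_NormedModule). auto_derive. auto. Qed.

Lemma ex_RInt_wcont a b g s t (c phi : R -> R) : a <= s -> s <= t -> t <= b -> wcont a b g ->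
  (forall x, continuous c x) -> (forall x, continuous phi x) ->
  ex_RInt (fun x => c x * phi (g x)) s t.
Proof.
  intros H1 H2 H3 Hg Hc Hphi.
  apply (ex_RInt_ext (fun x => c x * phi (g (clamp a b x)))).
  { intros x Hx. rewrite Rmin_left in Hx by lra. rewrite Rmax_right in Hx by lra.
    rewrite clamp_id by lra. reflexivity. }
  apply (@ex_RInt_continuous R_CompleteNormedModule). intros z _.
  apply (@continuous_mult R_UniformSpace R_AbsRing c (fun x => phi (g (clamp a b x)))). apply Hc.
  apply (@continuous_comp R_UniformSpace R_UniformSpace R_UniformSpace (fun x => g (clamp a b x)) phi). apply wcont_clamp; [lra|auto]. apply Hphi.
Qed.

Lemma RInt_fsum (g : nat -> R -> R) s t n : (forall k, ex_RInt (g k) s t) ->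
  ex_RInt (fun x => fsum (fun k => g k x) n) s t /\
  RInt (fun x => fsum (fun k => g k x) n) s t = fsum (fun k => RInt (g k) s t) n.
Proof.
  intros H. induction n.
  - simpl. split. apply ex_RInt_const. rewrite RInt_const. unfold scal; simpl; unfold mult; simpl. ring.
  - destruct IHn as [IH1 IH2]. simpl. split.
    + apply (ex_RInt_plus (fun x => fsum (fun k => g k x) n) (g n)); auto.
    + rewrite <- IH2. apply (RInt_plus (fun x => fsum (fun k => g k x) n) (g n)); auto.
Qed.

Lemma quad_lemma A B C : 0 <= A -> (forall r, 0 <= C - 2 * r * B + r^2 * A) -> B^2 <= A * C.
Proof.
  intros HA H. destruct (Rle_lt_or_eq_dec 0 A HA) as [HA'|HA'].
  - specialize (H (B / A)).
    replace (C - 2 * (B/A) * B + (B/A)^2 * A) with ((A*C - B^2)/A) in H by (field; lra).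
    assert (0 <= A*C - B^2). { replace (A*C - B^2) with (((A*C - B^2)/A) * A) by (field; lra). apply Rmult_le_pos; lra. } lra.
  - subst A. destruct (Req_dec B 0) as [->|HB].
    + specialize (H 0). lra.
    + specialize (H ((C + 1) / (2 * B))).
      replace (C - 2 * ((C + 1) / (2 * B)) * B + ((C + 1) / (2 * B))^2 * 0) with (-1) in H by (field; auto). lra.
Qed.

Lemma RInt_plusR f g a b : ex_RInt f a b -> ex_RInt g a b -> RInt (fun x => f x + g x) a b = RInt f a b + RInt g a b.
Proof. intros; apply (RInt_plus f g); auto. Qed.
Lemma RInt_minusR f g a b : ex_RInt f a b -> ex_RInt g a b -> RInt (fun x => f x - g x) a b = RInt f a b - RInt g a b.
Proof. intros; apply (RInt_minus f g); auto. Qed.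
Lemma RInt_scalR f c a b : ex_RInt f a b -> RInt (fun x => c * f x) a b = c * RInt f a b.
Proof. intros; apply (RInt_scal f a b c); auto. Qed.
Lemma ex_RInt_plusR f g a b : ex_RInt f a b -> ex_RInt g a b -> ex_RInt (fun x => f x + g x) a b.
Proof. intros; apply (ex_RInt_plus f g); auto. Qed.
Lemma ex_RInt_minusR f g a b : ex_RInt f a b -> ex_RInt g a b -> ex_RInt (fun x => f x - g x) a b.
Proof. intros; apply (ex_RInt_minus f g); auto. Qed.
Lemma ex_RInt_scalR f c a b : ex_RInt f a b -> ex_RInt (fun x => c * f x) a b.
Proof. intros; apply (ex_RInt_scal f a b c); auto. Qed.

Lemma RInt_CS a b w f : a <= b -> (forall x, a < x < b -> 0 <= w x) ->
  ex_RInt w a b -> ex_RInt (fun x => w x * f x) a b -> ex_RInt (fun x => w x * (f x)^2) a b ->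
  (RInt (fun x => w x * f x) a b)^2 <= RInt w a b * RInt (fun x => w x * (f x)^2) a b.
Proof.
  intros Hab Hw E1 E2 E3. apply quad_lemma.
  - apply RInt_ge_0; auto.
  - intros r.
    assert (E4 : ex_RInt (fun x => w x * (f x)^2 - 2 * r * (w x * f x)) a b).
    { apply ex_RInt_minusR; auto. apply ex_RInt_scalR; auto. }
    assert (Heq : RInt (fun x => w x * (f x)^2 - 2 * r * (w x * f x) + r^2 * w x) a b =
      RInt (fun x => w x * (f x)^2) a b - 2 * r * RInt (fun x => w x * f x) a b + r^2 * RInt w a b).
    { rewrite RInt_plusR; auto. rewrite RInt_minusR; auto. rewrite !RInt_scalR; auto.
      apply ex_RInt_scalR; auto. apply ex_RInt_scalR; auto. }
    rewrite <- Heq. apply RInt_ge_0; auto.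
    apply ex_RInt_plusR; auto. apply ex_RInt_scalR; auto.
    intros x Hx. specialize (Hw x Hx). pose proof (pow2_ge_0 (f x - r)). nra.
Qed.

Lemma RInt_explin l s t : 0 < l -> s <= t ->
  RInt (fun x => exp (- l * (t - x))) s t = (1 - exp (- l * (t - s))) / l.
Proof.
  intros Hl Hst. apply is_RInt_unique.
  assert (H := is_RInt_derive (fun x => exp (- l * (t - x)) / l) (fun x => exp (- l * (t - x))) s t).
  replace ((1 - exp (- l * (t - s))) / l) with (minus (exp (- l * (t - t)) / l) (exp (- l * (t - s)) / l)).
  apply H.
  - intros x _. auto_derive; auto. replace (t + - x) with (t - x) by ring. field. lra.
  - intros x _. apply cont_explin.
  - unfold minus, plus, opp; simpl. replace (- l * (t - t)) with 0 by ring. rewrite exp_0. field. lra.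
Qed.

Lemma RInt_explin_le l s t : 0 < l -> s <= t -> RInt (fun x => exp (- l * (t - x))) s t <= / l.
Proof.
  intros Hl Hst. rewrite RInt_explin by auto. pose proof (exp_pos (- l * (t - s))).
  unfold Rdiv. rewrite <- (Rmult_1_l (/ l)) at 2. apply Rmult_le_compat_r. left; apply Rinv_0_lt_compat; auto. lra.
Qed.


Definition sincr (f : nat -> nat) := forall i, (f i < f (S i))%nat.

Lemma sincr_ge f : sincr f -> forall i, (i <= f i)%nat.
Proof. intros H i. induction i. lia. specialize (H i). lia. Qed.

Lemma sincr_lt f : sincr f -> forall i k, (i < k)%nat -> (f i < f k)%nat.
Proof. intros H i k Hik. induction Hik. apply H. specialize (H m). lia. Qed.

Lemma BW (b : nat -> R) B J : (forall j, (J <= j)%nat -> Rabs (b j) <= B) ->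
  exists psi, sincr psi /\ exists l, Un_cv (fun i => b (psi i)) l.
Proof.
  intros Hb. destruct (ex_LimSup_seq b) as [l Hl]. destruct l as [L| |].
  - assert (Hp : forall i N, exists n, (N <= n)%nat /\ Rabs (b n - L) < / INR (S i)).
    { intros i N. assert (He : 0 < / INR (S i)). { apply Rinv_0_lt_compat. apply lt_0_INR. lia. }
      destruct (Hl (mkposreal _ He)) as [HA [N0 HB]]. simpl in *.
      destruct (HA (Nat.max N N0)) as [n [Hn Hn2]]. exists n. split. lia.
      specialize (HB n ltac:(lia)). apply Rabs_lt_between'. lra. }
    pose (pick := fun i N => proj1_sig (constructive_indefinite_description _ (Hp i N))).
    assert (Hpick : forall i N, (N <= pick i N)%nat /\ Rabs (b (pick i N) - L) < / INR (S i)).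
    { intros i N. unfold pick. destruct (constructive_indefinite_description _ (Hp i N)). simpl. auto. }
    pose (psi := fix f i := match i with O => pick O O | S i' => pick (S i') (S (f i')) end).
    exists psi. split.
    + intros i. simpl. destruct (Hpick (S i) (S (psi i))). lia.
    + exists L. intros eps Heps. destruct (archimed_cor1 eps Heps) as [n0 [Hn0 Hn0p]].
      exists n0. intros i Hi. unfold Rdist.
      assert (Hi' : Rabs (b (psi i) - L) < / INR (S i)).
      { destruct i; simpl; apply Hpick. }
      eapply Rlt_le_trans. apply Hi'. eapply Rle_trans. 2: left; apply Hn0.
      apply Rinv_le_contravar. apply lt_0_INR; lia. apply le_INR. lia.
  - exfalso. destruct (Hl B J) as [n [Hn Hn2]]. specialize (Hb n Hn). apply Rabs_le_between in Hb. lra.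
  - exfalso. destruct (Hl (- B - 1)) as [N0 HN]. specialize (HN (Nat.max N0 J) ltac:(lia)).
    specialize (Hb (Nat.max N0 J) ltac:(lia)). apply Rabs_le_between in Hb. lra.
Qed.

Fixpoint Phi (ext : nat -> (nat -> nat) -> (nat -> nat)) (m : nat) : nat -> nat :=
  match m with
  | O => ext O (fun i => i)
  | S m' => fun i => Phi ext m' (ext (S m') (Phi ext m') i)
  end.

Lemma diag (a : nat -> nat -> R) : (forall m, exists B J, forall j, (J <= j)%nat -> Rabs (a m j) <= B) ->
  exists phi, sincr phi /\ forall m, exists l, Un_cv (fun j => a m (phi j)) l.
Proof.
  intros Hbd.
  assert (Hext : forall m (Q : nat -> nat), exists psi, sincr psi /\ (sincr Q -> exists l, Un_cv (fun i => a m (Q (psi i))) l)).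
  { intros m Q. destruct (classic (sincr Q)) as [HQ|HQ].
    - destruct (Hbd m) as [B [J HB]].
      destruct (BW (fun i => a m (Q i)) B J) as [psi [H1 H2]].
      { intros j Hj. apply HB. pose proof (sincr_ge Q HQ j). lia. }
      exists psi. split; auto.
    - exists (fun i => i). split. intros i; lia. intros; contradiction. }
  pose (ext := fun m Q => proj1_sig (constructive_indefinite_description _ (Hext m Q))).
  assert (Hx : forall m Q, sincr (ext m Q) /\ (sincr Q -> exists l, Un_cv (fun i => a m (Q (ext m Q i))) l)).
  { intros m Q. unfold ext. destruct (constructive_indefinite_description _ (Hext m Q)). simpl. auto. }
  assert (Ps : forall m, sincr (Phi ext m)).
  { induction m. simpl. apply Hx. intros i. simpl. apply sincr_lt; auto. apply Hx. }
  assert (Pc : forall m, exists l, Un_cv (fun i => a m (Phi ext m i)) l).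
  { intros [|m]. simpl. apply (proj2 (Hx O (fun i => i))). intros i; lia.
    simpl. apply (proj2 (Hx (S m) (Phi ext m))). auto. }
  assert (Psub : forall m p i, exists i', (i <= i')%nat /\ Phi ext (p + m) i = Phi ext m i').
  { intros m p. induction p; intros i. exists i. split; auto.
    simpl. destruct (IHp (ext (S (p + m)) (Phi ext (p + m)) i)) as [i' [Hi' E]].
    exists i'. split. pose proof (sincr_ge _ (proj1 (Hx (S (p + m)) (Phi ext (p + m)))) i). lia. auto. }
  exists (fun j => Phi ext j j). split.
  - intros j. simpl. apply sincr_lt; auto. pose proof (sincr_ge _ (proj1 (Hx (S j) (Phi ext j))) (S j)). lia.
  - intros m. destruct (Pc m) as [l Hl]. exists l. intros eps Heps. destruct (Hl eps Heps) as [N0 HN].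
    exists (Nat.max N0 m). intros j Hj.
    destruct (Psub m (j - m)%nat j) as [i' [Hi' E]]. replace (j - m + m)%nat with j in E by lia.
    rewrite E. apply HN. lia.
Qed.

Lemma fin_event (Q : nat -> nat -> Prop) n :
  (forall i, (i < n)%nat -> exists J, forall j, (J <= j)%nat -> Q i j) ->
  exists J, forall i j, (i < n)%nat -> (J <= j)%nat -> Q i j.
Proof.
  induction n; intros H. exists O. intros; lia.
  destruct IHn as [J1 H1]. intros; apply H; lia.
  destruct (H n ltac:(lia)) as [J2 H2]. exists (Nat.max J1 J2). intros i j Hi Hj.
  destruct (Nat.eq_dec i n). subst; apply H2; lia. apply H1; lia.
Qed.

Lemma unif_conv (g : nat -> R -> R) (h : R -> R) a b L J0 :
  a <= b -> 0 <= L ->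
  (forall j x y, (J0 <= j)%nat -> a <= x <= b -> a <= y <= b -> Rabs (g j x - g j y) <= L * Rabs (x - y)) ->
  (forall x y, a <= x <= b -> a <= y <= b -> Rabs (h x - h y) <= L * Rabs (x - y)) ->
  (forall x, a <= x <= b -> Un_cv (fun j => g j x) (h x)) ->
  forall eps, 0 < eps -> exists J, forall j x, (J <= j)%nat -> a <= x <= b -> Rabs (g j x - h x) < eps.
Proof.
  intros Hab HL Hg Hh Hc eps Heps.
  set (e' := eps / (3 * (L * (b - a) + 1))).
  assert (He' : 0 < e'). { unfold e'. apply Rdiv_lt_0_compat. lra. nra. }
  destruct (archimed_cor1 e' He') as [P [HP HP0]].
  assert (HPr : 0 < INR P) by (apply lt_0_INR; lia).
  set (h0 := (b - a) / INR P).
  assert (Hh0 : 0 <= h0) by (unfold h0; apply Rdiv_le_0_compat; lra).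
  assert (Hsmall : L * h0 < eps / 3).
  { unfold h0. unfold e' in HP.
    assert (L * ((b - a) / INR P) = L * (b - a) * / INR P) by (unfold Rdiv; ring). rewrite H.
    assert (L * (b - a) * / INR P <= L * (b - a) * (eps / (3 * (L * (b - a) + 1)))).
    { apply Rmult_le_compat_l. nra. lra. }
    assert (L * (b - a) * (eps / (3 * (L * (b - a) + 1))) < eps / 3).
    { replace (L * (b - a) * (eps / (3 * (L * (b - a) + 1)))) with ((eps / 3) * (L * (b - a) / (L * (b - a) + 1))) by (field; nra).
      assert (L * (b - a) / (L * (b - a) + 1) < 1). { apply (Rmult_lt_reg_r (L * (b - a) + 1)). nra. field_simplify; nra. }
      nra. }
    lra. }
  set (xg := fun i => a + INR i * h0).
  assert (Hxg : forall i, (i <= P)%nat -> a <= xg i <= b).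
  { intros i Hi. apply le_INR in Hi. split.
    unfold xg. pose proof (pos_INR i). nra. unfold xg, h0.
    replace (a + INR i * ((b - a) / INR P)) with (a + (b - a) * (INR i / INR P)) by (field; lra).
    assert (INR i / INR P <= 1). { apply (Rmult_le_reg_r (INR P)); auto. field_simplify; lra. }
    assert (0 <= INR i / INR P). { apply Rdiv_le_0_compat; auto. apply pos_INR. } nra. }
  destruct (fin_event (fun i j => Rabs (g j (xg i) - h (xg i)) < eps / 3) (S P)) as [J1 HJ1].
  { intros i Hi. destruct (Hc (xg i) (Hxg i ltac:(lia)) (eps / 3)) as [J HJ]. lra. exists J. intros j Hj. apply HJ. lia. }
  exists (Nat.max J0 J1). intros j x Hj Hx.
  assert (Hi : exists i, (i <= P)%nat /\ Rabs (x - xg i) <= h0).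
  { destruct (Req_dec b a) as [Eab|Eab].
    - exists O. split. lia. unfold xg. simpl. replace (x - (a + 0 * h0)) with 0 by lra. rewrite Rabs_R0. auto.
    - assert (Hq : 0 <= (x - a) / h0). { apply Rdiv_le_0_compat. lra. unfold h0. apply Rdiv_lt_0_compat; lra. }
      destruct (nfloor_ex _ Hq) as [i [Hi1 Hi2]]. exists i.
      assert (Hh0p : 0 < h0) by (unfold h0; apply Rdiv_lt_0_compat; lra).
      assert (Hx1 : INR i * h0 <= x - a). { apply (Rmult_le_compat_r h0) in Hi1; [|lra]. field_simplify in Hi1; lra. }
      assert (Hx2 : x - a < INR i * h0 + h0). { apply (Rmult_lt_compat_r h0) in Hi2; [|lra]. field_simplify in Hi2; lra. }
      split.
      + assert (INR i * h0 <= INR P * h0). { unfold h0 at 2. replace (INR P * ((b - a) / INR P)) with (b - a) by (field; lra). lra. }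
        apply INR_le. apply (Rmult_le_reg_r h0); auto.
      + unfold xg. rewrite Rabs_pos_eq by lra. lra. }
  destruct Hi as [i [Hi Hxi]].
  replace (g j x - h x) with ((g j x - g j (xg i)) + (g j (xg i) - h (xg i)) + (h (xg i) - h x)) by ring.
  eapply Rle_lt_trans. eapply Rle_trans. apply Rabs_triang. apply Rplus_le_compat_r. apply Rabs_triang.
  pose proof (Hg j x (xg i) ltac:(lia) Hx (Hxg i Hi)).
  pose proof (Hh (xg i) x (Hxg i Hi) Hx). rewrite (Rabs_minus_sym (xg i) x) in H0.
  pose proof (HJ1 i j ltac:(lia) ltac:(lia)).
  assert (L * Rabs (x - xg i) <= L * h0) by (apply Rmult_le_compat_l; auto).
  lra.
Qed.


Lemma Un_cv_const c : Un_cv (fun _ => c) c.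
Proof. intros eps He. exists O. intros. unfold Rdist. rewrite Rminus_diag, Rabs_R0. auto. Qed.

Lemma fsum_cv (c : nat -> nat -> R) (l : nat -> R) K :
  (forall k, (k < K)%nat -> Un_cv (fun j => c j k) (l k)) -> Un_cv (fun j => fsum (c j) K) (fsum l K).
Proof.
  induction K; intros H; simpl. apply Un_cv_const.
  apply CV_plus. apply IHK. intros; apply H; lia. apply H; lia.
Qed.

Lemma Un_cv_event a b l J : (forall j, (J <= j)%nat -> a j = b j) -> Un_cv a l -> Un_cv b l.
Proof.
  intros He H eps Heps. destruct (H eps Heps) as [N HN]. exists (Nat.max N J). intros n Hn.
  rewrite <- He by lia. apply HN. lia.
Qed.

Lemma Un_cv_abs_le a l B J : Un_cv a l -> (forall j, (J <= j)%nat -> Rabs (a j) <= B) -> Rabs l <= B.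
Proof.
  intros H Hb. apply Rabs_le_between. split.
  - apply (Un_cv_ge a l (-B) J H). intros n Hn. specialize (Hb n Hn). apply Rabs_le_between in Hb. lra.
  - apply (Un_cv_le a l B J H). intros n Hn. specialize (Hb n Hn). apply Rabs_le_between in Hb. lra.
Qed.

Lemma fsum_head (a : nat -> R) N K : (forall k, 0 <= a k) ->
  fsum (fun k => if (k <? N)%nat then a k else 0) K <= fsum a N.
Proof.
  intros H.
  assert (E : fsum (fun k => if (k <? N)%nat then a k else 0) K = fsum a (Nat.min K N)).
  { induction K. reflexivity. cbn [fsum]. rewrite IHK. destruct (K <? N)%nat eqn:E.
    - apply Nat.ltb_lt in E. replace (Nat.min (S K) N) with (S K) by lia.
      replace (Nat.min K N) with K by lia. reflexivity.
    - apply Nat.ltb_ge in E. replace (Nat.min (S K) N) with (Nat.min K N) by lia. lra. }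
  rewrite E. apply fsum_mono; auto. lia.
Qed.

Lemma fsum_split (a : nat -> R) N K :
  fsum a K = fsum (fun k => if (k <? N)%nat then a k else 0) K + fsum (fun k => if (k <? N)%nat then 0 else a k) K.
Proof. rewrite <- fsum_plus. apply fsum_ext. intros k _. destruct (k <? N)%nat; ring. Qed.

Lemma eqc_bound (p q : vec) (c : nat -> R) M tau K :
  (forall k, (k < M)%nat -> Rabs (p k - q k) <= c k) ->
  fsum (fun k => if (k <? M)%nat then 0 else (p k)^2) K <= tau ->
  fsum (fun k => if (k <? M)%nat then 0 else (q k)^2) K <= tau ->
  fsum (fun k => (p k - q k)^2) K <= fsum (fun k => (c k)^2) M + 4 * tau.
Proof.
  intros Hc Hp Hq.
  eapply Rle_trans with (fsum (fun k => (if (k <? M)%nat then (c k)^2 else 0) +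
     (2 * (if (k <? M)%nat then 0 else (p k)^2) + 2 * (if (k <? M)%nat then 0 else (q k)^2))) K).
  - apply fsum_le. intros k _. destruct (k <? M)%nat eqn:E.
    + apply Nat.ltb_lt in E. specialize (Hc k E). assert (0 <= c k) by (pose proof (Rabs_pos (p k - q k)); lra).
      rewrite <- (pow2_abs (p k - q k)). assert (Rabs (p k - q k) ^ 2 <= c k ^2) by (pose proof (Rabs_pos (p k - q k)); nra). lra.
    + pose proof (pow2_ge_0 (p k + q k)). nra.
  - rewrite !fsum_plus, !fsum_scal.
    pose proof (fsum_head (fun k => (c k)^2) M K (fun k => pow2_ge_0 _)). lra.
Qed.

Definition dec3 (m : nat) : nat * nat * nat :=
  let (k, r) := Cantor.of_nat m in let (i, q) := Cantor.of_nat r in (k, i, q).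

Lemma dec3_surj k i q : exists m, dec3 m = (k, i, q).
Proof. exists (Cantor.to_nat (k, Cantor.to_nat (i, q))). unfold dec3. rewrite !Cantor.cancel_of_to. reflexivity. Qed.

Lemma cv_bounded a l : Un_cv a l -> exists B, forall j, Rabs (a j) <= B.
Proof.
  intros H. destruct (maj_by_pos a (exist _ l H)) as [B [_ HB]]. exists B. auto.
Qed.

Lemma Un_cv_sub (a : nat -> R) (phi : nat -> nat) l : (forall i, (i <= phi i)%nat) -> Un_cv a l -> Un_cv (fun j => a (phi j)) l.
Proof. intros Hp H eps He. destruct (H eps He) as [N HN]. exists N. intros n Hn. apply HN. specialize (Hp n). lia. Qed.

Lemma exp_mono x y : x <= y -> exp x <= exp y.
Proof. intros [H|H]. left; apply exp_increasing; auto. subst; lra. Qed.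

Section Est.
Variable lam : nat -> R.
Variable F : vec -> vec.
Variables K0 K1 : R.
Variable N : nat.
Hypothesis hlam0 : 0 < lam 0%nat.
Hypothesis hlam_mono : forall k, lam k <= lam (S k).
Hypothesis hK0 : 0 < K0.
Hypothesis hK1 : 0 < K1.
Hypothesis hFl2 : forall v, l2 v -> l2 (F v).
Hypothesis hFbnd : forall v, l2 v -> nrm (F v) <= K0.
Hypothesis hFlip : forall v w, l2 v -> l2 w -> vdist (F v) (F w) <= K1 * vdist v w.

Lemma lam_le i k : (i <= k)%nat -> lam i <= lam k.
Proof. intros H. induction H. lra. specialize (hlam_mono m). lra. Qed.

Lemma lam_pos k : 0 < lam k.
Proof. pose proof (lam_le 0 k ltac:(lia)). lra. Qed.

Lemma Fcoord_bnd v k : l2 v -> Rabs (F v k) <= K0.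
Proof. intros H. eapply Rle_trans. apply coord_le_nrm. auto. auto. Qed.

Lemma Fcoord_lip v w k : l2 v -> l2 w -> Rabs (F v k - F w k) <= K1 * vdist v w.
Proof. intros Hv Hw. eapply Rle_trans. apply coord_le_vdist; auto. auto. Qed.

Section Sol.
Variables a b : R.
Variable v : R -> vec.
Hypothesis hv : mild_solution lam F (fun s => a <= s <= b) v.

Lemma mild_l2 t : a <= t <= b -> l2 (v t).
Proof. intros H. apply (proj1 (proj1 hv)). auto. Qed.

Lemma mild_formula s t k : a <= s -> s <= t -> t <= b ->
  v t k = exp (- lam k * (t - s)) * v s k + RInt (fun tau => exp (- lam k * (t - tau)) * F (v tau) k) s t.
Proof. intros. apply (proj2 hv); lra. Qed.

Lemma mild_wcontF k : wcont a b (fun tau => F (v tau) k).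
Proof.
  intros t Ht eps Heps. destruct hv as [[_ Hc] _].
  destruct (Hc t Ht (eps / K1)) as [d [Hd H]]. apply Rdiv_lt_0_compat; lra.
  exists d. split; auto. intros s Hs Hst.
  eapply Rle_lt_trans. apply Fcoord_lip; apply mild_l2; auto.
  specialize (H s Hs Hst). apply (Rmult_lt_compat_l K1) in H; [|lra].
  replace (K1 * (eps / K1)) with eps in H by (field; lra). lra.
Qed.

Lemma mild_int s t k l : a <= s -> s <= t -> t <= b ->
  ex_RInt (fun tau => exp (- l * (t - tau)) * F (v tau) k) s t.
Proof.
  intros. apply (ex_RInt_wcont a b (fun tau => F (v tau) k) s t (fun x => exp (- l * (t - x))) (fun y => y)); auto.
  apply mild_wcontF. intros; apply cont_explin. intros; apply continuous_id.
Qed.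

Lemma mild_int2 s t k l : a <= s -> s <= t -> t <= b ->
  ex_RInt (fun tau => exp (- l * (t - tau)) * (F (v tau) k)^2) s t.
Proof.
  intros. apply (ex_RInt_wcont a b (fun tau => F (v tau) k) s t (fun x => exp (- l * (t - x))) (fun y => y^2)); auto.
  apply mild_wcontF. intros; apply cont_explin. intros; apply (@ex_derive_continuous R_AbsRing R_NormedModule). auto_derive. auto.
Qed.

Lemma int_bound s t k : a <= s -> s <= t -> t <= b ->
  Rabs (RInt (fun tau => exp (- lam k * (t - tau)) * F (v tau) k) s t) <= (t - s) * K0.
Proof.
  intros. apply abs_RInt_le_const; auto. apply mild_int; auto.
  intros x Hx. rewrite Rabs_mult. rewrite Rabs_pos_eq by (left; apply exp_pos).
  pose proof (lam_pos k).
  assert (exp (- lam k * (t - x)) <= 1). { rewrite <- exp_0. apply exp_mono. nra. }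
  pose proof (Fcoord_bnd (v x) k (mild_l2 x ltac:(lra))). pose proof (Rabs_pos (F (v x) k)).
  pose proof (exp_pos (- lam k * (t - x))). nra.
Qed.

Lemma coord_back s k : a <= s <= b ->
  Rabs (v s k) <= exp (lam k * (b - s)) * (Rabs (v b k) + K0 * (b - s)).
Proof.
  intros Hs. pose proof (mild_formula s b k ltac:(lra) ltac:(lra) ltac:(lra)) as E.
  pose proof (int_bound s b k ltac:(lra) ltac:(lra) ltac:(lra)) as I.
  set (J := RInt _ s b) in *.
  assert (Hvs : v s k = exp (lam k * (b - s)) * (v b k - J)).
  { assert (Hx : exp (lam k * (b - s)) * exp (- lam k * (b - s)) = 1).
    { rewrite <- exp_plus. replace (lam k * (b - s) + - lam k * (b - s)) with 0 by ring. apply exp_0. }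
    rewrite E. transitivity (exp (lam k * (b - s)) * exp (- lam k * (b - s)) * v s k). rewrite Hx; ring. ring. }
  rewrite Hvs, Rabs_mult, Rabs_pos_eq by (left; apply exp_pos).
  apply Rmult_le_compat_l. left; apply exp_pos.
  unfold Rminus. eapply Rle_trans. apply Rabs_triang. rewrite Rabs_Ropp. lra.
Qed.

Lemma coord_lip s t k : a <= s -> s <= t -> t <= b ->
  Rabs (v t k - v s k) <= (lam k * Rabs (v s k) + K0) * (t - s).
Proof.
  intros H1 H2 H3. rewrite (mild_formula s t k H1 H2 H3).
  pose proof (int_bound s t k H1 H2 H3) as I. set (J := RInt _ s t) in *.
  replace (exp (- lam k * (t - s)) * v s k + J - v s k) with ((exp (- lam k * (t - s)) - 1) * v s k + J) by ring.
  eapply Rle_trans. apply Rabs_triang. rewrite Rabs_mult.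
  assert (Rabs (exp (- lam k * (t - s)) - 1) <= lam k * (t - s)).
  { pose proof (lam_pos k). pose proof (exp_ineq1_le (- lam k * (t - s))).
    assert (exp (- lam k * (t - s)) <= 1). { rewrite <- exp_0. apply exp_mono. nra. }
    rewrite Rabs_left1 by lra. lra. }
  pose proof (Rabs_pos (v s k)). pose proof (Rabs_pos (exp (- lam k * (t - s)) - 1)). nra.
Qed.

Lemma tail_bound t M K : Qproj N (v a) = (fun _ => 0) -> a <= t <= b -> (N <= M)%nat ->
  fsum (fun k => if (k <? M)%nat then 0 else (v t k)^2) K <= (K0 / lam M)^2.
Proof.
  intros HQ Ht HM.
  pose proof (lam_pos M) as HlM.
  set (w := fun l x => exp (- l * (t - x))).
  set (g := fun k x => if (k <? M)%nat then 0 else (F (v x) k)^2).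
  assert (Eg : forall k, ex_RInt (fun x => w (lam M) x * g k x) a t).
  { intros k. unfold g, w. destruct (k <? M)%nat.
    - apply (ex_RInt_ext (fun _ => 0)). intros; symmetry; apply Rmult_0_r. apply ex_RInt_const.
    - apply mild_int2; lra. }
  assert (Hterm : forall k, (if (k <? M)%nat then 0 else (v t k)^2) <= / lam M * RInt (fun x => w (lam M) x * g k x) a t).
  { intros k. unfold g. destruct (k <? M)%nat eqn:Hk.
    - rewrite (RInt_ext _ (fun _ => 0)). rewrite RInt_const. unfold scal; simpl; unfold mult; simpl. lra.
      intros; apply Rmult_0_r.
    - apply Nat.ltb_ge in Hk.
      assert (Hva : v a k = 0). { assert (H := f_equal (fun f => f k) HQ). simpl in H. unfold Qproj in H.
        destruct (k <? N)%nat eqn:E; auto. apply Nat.ltb_lt in E. lia. }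
      rewrite (mild_formula a t k) by lra. rewrite Hva, Rmult_0_r, Rplus_0_l.
      pose proof (lam_pos k) as Hlk.
      assert (CS := RInt_CS a t (w (lam k)) (fun x => F (v x) k) ltac:(lra)).
      assert (E1 : ex_RInt (w (lam k)) a t). { unfold w. apply (@ex_RInt_continuous R_CompleteNormedModule). intros; apply cont_explin. }
      specialize (CS ltac:(intros; unfold w; left; apply exp_pos) E1 (mild_int a t k (lam k) ltac:(lra) ltac:(lra) ltac:(lra))
        (mild_int2 a t k (lam k) ltac:(lra) ltac:(lra) ltac:(lra))).
      unfold w in CS. eapply Rle_trans. apply CS.
      assert (R1 : RInt (fun x => exp (- lam k * (t - x))) a t <= / lam M).
      { eapply Rle_trans. apply RInt_explin_le; lra. apply Rinv_le_contravar; auto. apply lam_le; auto. }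
      assert (R2 : RInt (fun x => exp (- lam k * (t - x)) * F (v x) k ^ 2) a t <= RInt (fun x => exp (- lam M * (t - x)) * F (v x) k ^ 2) a t).
      { apply RInt_le. lra. apply mild_int2; lra. apply mild_int2; lra.
        intros x Hx. apply Rmult_le_compat_r. apply pow2_ge_0. apply exp_mono.
        pose proof (lam_le M k Hk). nra. }
      assert (R0 : 0 <= RInt (fun x => exp (- lam k * (t - x)) * F (v x) k ^ 2) a t).
      { apply RInt_ge_0. lra. apply mild_int2; lra. intros. pose proof (exp_pos (- lam k * (t - x))). pose proof (pow2_ge_0 (F (v x) k)). nra. }
      assert (R3 : 0 <= RInt (fun x => exp (- lam k * (t - x))) a t).
      { apply RInt_ge_0. lra. auto. intros. left; apply exp_pos. }
      apply Rmult_le_compat; auto. }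
  eapply Rle_trans. apply (fsum_le _ _ K (fun k _ => Hterm k)).
  rewrite fsum_scal.
  destruct (RInt_fsum (fun k x => w (lam M) x * g k x) a t K Eg) as [EK IK].
  rewrite <- IK.
  assert (Hb : RInt (fun x => fsum (fun k => w (lam M) x * g k x) K) a t <= RInt (fun x => w (lam M) x * K0^2) a t).
  { apply RInt_le. lra. auto. apply (ex_RInt_ext (fun x => K0^2 * w (lam M) x)). intros; apply Rmult_comm. apply ex_RInt_scalR. unfold w. apply (@ex_RInt_continuous R_CompleteNormedModule). intros; apply cont_explin.
    intros x Hx. rewrite fsum_scal. unfold w. apply Rmult_le_compat_l. left; apply exp_pos.
    eapply Rle_trans with (fsum (fun k => (F (v x) k)^2) K).
    apply fsum_le. intros k _. unfold g. destruct (k <? M)%nat. apply pow2_ge_0. lra.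
    eapply Rle_trans. apply fsum_le_nrm2. apply hFl2, mild_l2; lra.
    pose proof (nrm_nonneg (F (v x))). pose proof (hFbnd (v x) (mild_l2 x ltac:(lra))). nra. }
  assert (Hc : RInt (fun x => w (lam M) x * K0^2) a t <= K0^2 / lam M).
  { rewrite (RInt_ext _ (fun x => K0^2 * w (lam M) x)) by (intros; apply Rmult_comm).
    rewrite RInt_scalR. unfold w. pose proof (RInt_explin_le (lam M) a t HlM ltac:(lra)).
    unfold Rdiv. apply Rmult_le_compat_l. apply pow2_ge_0. auto.
    unfold w. apply (@ex_RInt_continuous R_CompleteNormedModule). intros; apply cont_explin. }
  replace ((K0 / lam M)^2) with (/ lam M * (K0^2 / lam M)) by (field; lra).
  apply Rmult_le_compat_l. left; apply Rinv_0_lt_compat; auto. lra.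
Qed.

End Sol.

Hypothesis hlam_inf : is_lim_seq lam p_infty.

Lemma lam_big X : exists M0, forall m, (M0 <= m)%nat -> X < lam m.
Proof. pose proof hlam_inf as H. apply is_lim_seq_spec in H. destruct (H X) as [M0 HM]. exists M0. auto. Qed.

Lemma hcont_sub (J J' : R -> Prop) u : (forall s, J' s -> J s) -> H_continuous_on J u -> H_continuous_on J' u.
Proof.
  intros HJ [H1 H2]. split. intros; apply H1; auto.
  intros t Ht eps He. destruct (H2 t (HJ t Ht) eps He) as [d [Hd H]]. exists d. split; auto.
Qed.

Lemma hcont_wcontF a b u k : H_continuous_on (fun s => a <= s <= b) u -> wcont a b (fun tau => F (u tau) k).
Proof.
  intros [Hl Hc] t Ht eps Heps.
  destruct (Hc t Ht (eps / K1)) as [d [Hd H]]. apply Rdiv_lt_0_compat; lra.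
  exists d. split; auto. intros s Hs Hst.
  eapply Rle_lt_trans. apply Fcoord_lip; apply Hl; auto.
  specialize (H s Hs Hst). apply (Rmult_lt_compat_l K1) in H; [|lra].
  replace (K1 * (eps / K1)) with eps in H by (field; lra). lra.
Qed.

Lemma hcont_int a b u k l s t : H_continuous_on (fun s => a <= s <= b) u -> a <= s -> s <= t -> t <= b ->
  ex_RInt (fun tau => exp (- l * (t - tau)) * F (u tau) k) s t.
Proof.
  intros Hu H1 H2 H3. apply (ex_RInt_wcont a b (fun tau => F (u tau) k) s t (fun x => exp (- l * (t - x))) (fun y => y)); auto.
  apply hcont_wcontF; auto. intros; apply cont_explin. intros; apply continuous_id.
Qed.

Lemma mild_shift T U : mild_solution lam F (fun s => 0 <= s <= T) U ->
  mild_solution lam F (fun s => -T <= s <= 0) (fun t => U (t + T)).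
Proof.
  intros HU. split.
  - destruct HU as [[Hl Hc] _]. split.
    + intros t Ht. apply Hl. lra.
    + intros t Ht eps He. destruct (Hc (t+T) ltac:(lra) eps He) as [d [Hd H]]. exists d. split; auto.
      intros s Hs Hst. apply H. lra. replace (s + T - (t + T)) with (s - t) by ring. auto.
  - intros s t Hs Ht Hst k. rewrite (mild_formula 0 T U HU (s+T) (t+T) k) by lra.
    replace (t + T - (s + T)) with (t - s) by ring. f_equal.
    assert (Hc := RInt_comp_lin (fun tau => exp (- lam k * (t + T - tau)) * F (U tau) k) 1 T s t).
    replace (1 * s + T) with (s+T) in Hc by ring. replace (1*t+T) with (t+T) in Hc by ring.
    rewrite <- Hc. apply RInt_ext. intros y _. unfold scal; simpl; unfold mult; simpl.
    replace (1 * y + T) with (y + T) by ring. replace (t + T - (y + T)) with (t - y) by ring. ring.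
    apply (mild_int 0 T U HU); lra.
Qed.

Lemma Un_cv_sq a l : Un_cv a l -> Un_cv (fun j => (a j)^2) (l^2).
Proof.
  intros H. replace (l^2) with (l * l) by ring.
  apply (Un_cv_event (fun j => a j * a j) _ _ O). intros; ring. apply CV_mult; auto.
Qed.

Lemma main_incl x : M_inf lam F N x -> M_minf lam F N x.
Proof.
  intros [Hx2 [n [xs [Hn0 [Hninc [HM Hlim]]]]]].
  pose (T := fun j => INR (n j)).
  pose (U := fun j => proj1_sig (constructive_indefinite_description _ (HM j))).
  assert (HU : forall j, mild_solution lam F (fun s => 0 <= s <= T j) (U j) /\ Qproj N (U j 0) = (fun _ => 0) /\ xs j = U j (T j)).
  { intros j. unfold U. destruct (constructive_indefinite_description _ (HM j)) as [u Hu]. simpl. exact Hu. }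
  pose (W := fun j t => U j (t + T j)).
  assert (HW : forall j, mild_solution lam F (fun s => - T j <= s <= 0) (W j)).
  { intros j. apply mild_shift. apply HU. }
  assert (HWQ : forall j, Qproj N (W j (- T j)) = (fun _ => 0)).
  { intros j. unfold W. replace (- T j + T j) with 0 by ring. apply HU. }
  assert (HW0 : forall j, W j 0 = xs j).
  { intros j. unfold W. rewrite Rplus_0_l. symmetry. apply HU. }
  assert (HnS : forall j, (S j <= n j)%nat).
  { induction j. lia. specialize (Hninc j). lia. }
  assert (HT0 : forall j, 0 <= T j). { intros; apply pos_INR. }
  assert (HTge : forall j, INR j + 1 <= T j). { intros j. unfold T. rewrite <- S_INR. apply le_INR. auto. }
  assert (HTbig : forall T0, exists J, forall j, (J <= j)%nat -> T0 <= T j).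
  { intros T0. destruct (Rle_dec 0 T0) as [H0|H0].
    - destruct (nfloor_ex T0 H0) as [i [Hi1 Hi2]]. exists i. intros j Hj. apply le_INR in Hj. specialize (HTge j). lra.
    - exists O. intros j _. specialize (HT0 j). lra. }
  assert (Hlim' : Un_cv (fun j => vdist (xs j) x) 0). { apply is_lim_seq_Reals. exact Hlim. }
  destruct (cv_bounded _ _ Hlim') as [Bd HBd].
  assert (Hxsl2 : forall j, l2 (xs j)). { intros j. rewrite <- HW0. apply (mild_l2 _ _ _ (HW j)). specialize (HT0 j). lra. }
  assert (HBd0 : 0 <= Bd). { specialize (HBd O). pose proof (Rabs_pos (vdist (xs O) x)). lra. }
  assert (HW0b : forall j k, Rabs (W j 0 k) <= Rabs (x k) + Bd).
  { intros j k. rewrite HW0. pose proof (coord_le_vdist (xs j) x k (Hxsl2 j) Hx2). specialize (HBd j).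
    rewrite Rabs_pos_eq in HBd by (apply nrm_nonneg).
    replace (xs j k) with ((xs j k - x k) + x k) by ring. eapply Rle_trans. apply Rabs_triang. lra. }
  pose (Bk := fun k T0 => exp (lam k * T0) * (Rabs (x k) + Bd + K0 * T0)).
  pose (Lk := fun k T0 => lam k * Bk k T0 + K0).
  assert (HBkpos : forall k T0, 0 <= T0 -> 0 <= Bk k T0).
  { intros k T0 H. unfold Bk. pose proof (exp_pos (lam k * T0)). pose proof (Rabs_pos (x k)). 
    apply Rmult_le_pos; nra. }
  assert (HLkpos : forall k T0, 0 <= T0 -> 0 <= Lk k T0).
  { intros k T0 H. unfold Lk. pose proof (lam_pos k). pose proof (HBkpos k T0 H). nra. }
  assert (HWb : forall j k T0 t, T0 <= T j -> - T0 <= t <= 0 -> Rabs (W j t k) <= Bk k T0).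
  { intros j k T0 t HT Ht. eapply Rle_trans. apply (coord_back _ _ _ (HW j) t k). lra.
    unfold Bk. pose proof (lam_pos k). specialize (HW0b j k).
    apply Rmult_le_compat. left; apply exp_pos. pose proof (Rabs_pos (W j 0 k)). nra.
    apply exp_mono. nra. nra. }
  assert (HWlip : forall j k T0 s t, T0 <= T j -> - T0 <= s <= 0 -> - T0 <= t <= 0 -> Rabs (W j t k - W j s k) <= Lk k T0 * Rabs (t - s)).
  { intros j k T0 s t HT Hs Ht.
    assert (Hgen : forall s t, -T0 <= s -> s <= t -> t <= 0 -> Rabs (W j t k - W j s k) <= Lk k T0 * Rabs (t - s)).
    { clear s t Hs Ht. intros s t H1 H2 H3. eapply Rle_trans. apply (coord_lip _ _ _ (HW j) s t k); lra.
      rewrite (Rabs_pos_eq (t - s)) by lra. unfold Lk. apply Rmult_le_compat_r. lra.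
      pose proof (lam_pos k). pose proof (HWb j k T0 s HT ltac:(lra)). nra. }
    destruct (Rle_dec s t). apply Hgen; lra. rewrite Rabs_minus_sym, (Rabs_minus_sym t s). apply Hgen; lra. }
  assert (HWtail : forall j t M K, - T j <= t <= 0 -> (N <= M)%nat ->
     fsum (fun k => if (k <? M)%nat then 0 else (W j t k)^2) K <= (K0 / lam M)^2).
  { intros j t M K Ht HM'. apply (tail_bound _ _ _ (HW j)); auto. }
  pose (dpt := fun i q => - (INR i / INR (S q))).
  pose (aa := fun m j => let '(k, i, q) := dec3 m in W j (dpt i q) k).
  destruct (diag aa) as [phi [Hphi Hconv]].
  { intros m. unfold aa. destruct (dec3 m) as [[k i] q].
    assert (Hd : 0 <= INR i / INR (S q)). { apply Rdiv_le_0_compat. apply pos_INR. apply lt_0_INR; lia. }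
    destruct (HTbig (INR i / INR (S q))) as [J HJ]. exists (Bk k (INR i / INR (S q))), J. intros j Hj.
    apply HWb. auto. unfold dpt. lra. }
  pose (V := fun j => W (phi j)).
  assert (HTV : forall T0, exists J, forall j, (J <= j)%nat -> T0 <= T (phi j)).
  { intros T0. destruct (HTbig T0) as [J HJ]. exists J. intros j Hj. apply HJ. pose proof (sincr_ge _ Hphi j). lia. }
  assert (Hgrid : forall k i q, exists l, Un_cv (fun j => V j (dpt i q) k) l).
  { intros k i q. destruct (dec3_surj k i q) as [m Hm]. destruct (Hconv m) as [l Hl]. exists l.
    unfold aa in Hl. rewrite Hm in Hl. exact Hl. }
  assert (Hcv : forall t k, t <= 0 -> exists l, Un_cv (fun j => V j t k) l).
  { intros t k Ht. destruct (Rcomplete.R_complete (fun j => V j t k)) as [l Hl]; [|exists l; exact Hl].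
    intros eps Heps.
    set (T0 := - t + 1). set (L := Lk k T0).
    assert (HL : 0 <= L) by (apply HLkpos; unfold T0; lra).
    destruct (archimed_cor1 (eps / (3 * (L + 1)))) as [q [Hq Hq0]]. { apply Rdiv_lt_0_compat; lra. }
    assert (HSq : 0 < INR (S q)) by (apply lt_0_INR; lia).
    assert (Hq' : / INR (S q) < eps / (3 * (L+1))).
    { eapply Rle_lt_trans; [|exact Hq]. apply Rinv_le_contravar. apply lt_0_INR; lia. apply le_INR; lia. }
    assert (Hpos : 0 <= - t * INR (S q)) by nra.
    destruct (nfloor_ex _ Hpos) as [i [Hi1 Hi2]].
    set (d := dpt i q).
    assert (Hdq : d * INR (S q) = - INR i). { unfold d, dpt. field. lra. }
    assert (Hd1 : t <= d). { apply (Rmult_le_reg_r (INR (S q))); auto. lra. }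
    assert (Hd2 : d - t < / INR (S q)).
    { apply (Rmult_lt_reg_r (INR (S q))); auto. rewrite Rinv_l by lra. lra. }
    assert (Hd3 : d <= 0). { apply (Rmult_le_reg_r (INR (S q))); auto. pose proof (pos_INR i). lra. }
    destruct (Hgrid k i q) as [ld Hld].
    destruct (CV_Cauchy _ (exist _ ld Hld) (eps/3)) as [N1 HN1]. lra.
    destruct (HTV T0) as [J0 HJ0].
    assert (HLd : L * Rabs (t - d) < eps / 3).
    { rewrite Rabs_minus_sym, Rabs_pos_eq by lra.
      assert (L * (d - t) <= L * / INR (S q)) by (apply Rmult_le_compat_l; lra).
      assert (L * / INR (S q) <= L * (eps / (3 * (L + 1)))) by (apply Rmult_le_compat_l; lra).
      assert (L * (eps / (3 * (L + 1))) < eps / 3).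
      { replace (L * (eps / (3 * (L + 1)))) with ((eps / 3) * (L / (L + 1))) by (field; lra).
        assert (L / (L + 1) < 1). { apply (Rmult_lt_reg_r (L + 1)). lra. unfold Rdiv. rewrite Rmult_assoc, Rinv_l by lra. lra. }
        nra. }
      lra. }
    exists (Nat.max N1 J0). intros j j' Hj Hj'. unfold Rdist.
    assert (H1 : Rabs (V j d k - V j' d k) < eps / 3) by exact (HN1 j j' ltac:(lia) ltac:(lia)).
    pose proof (HWlip (phi j) k T0 d t (HJ0 j ltac:(lia)) ltac:(unfold T0; lra) ltac:(unfold T0; lra)).
    pose proof (HWlip (phi j') k T0 t d (HJ0 j' ltac:(lia)) ltac:(unfold T0; lra) ltac:(unfold T0; lra)).
    rewrite (Rabs_minus_sym d t) in H0.
    replace (V j t k - V j' t k) with ((V j t k - V j d k) + (V j d k - V j' d k) + (V j' d k - V j' t k)) by ring.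
    eapply Rle_lt_trans. eapply Rle_trans. apply Rabs_triang. apply Rplus_le_compat_r. apply Rabs_triang.
    unfold V in *. fold L in H, H0. lra. }
  pose (u := fun t k => epsilon (inhabits 0) (fun l => Un_cv (fun j => V j t k) l)).
  assert (Hu : forall t k, t <= 0 -> Un_cv (fun j => V j t k) (u t k)).
  { intros t k Ht. unfold u. apply epsilon_spec. apply Hcv; auto. }
  assert (Hub : forall k T0 t, 0 <= T0 -> - T0 <= t <= 0 -> Rabs (u t k) <= Bk k T0).
  { intros k T0 t H0 Ht. destruct (HTV T0) as [J HJ]. apply (Un_cv_abs_le _ _ _ J (Hu t k ltac:(lra))).
    intros j Hj. apply HWb; auto. }
  assert (Hulip : forall k T0 s t, - T0 <= s <= 0 -> - T0 <= t <= 0 -> Rabs (u t k - u s k) <= Lk k T0 * Rabs (t - s)).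
  { intros k T0 s t Hs Ht. destruct (HTV T0) as [J HJ].
    apply (Un_cv_abs_le (fun j => V j t k - V j s k) _ _ J). apply CV_minus; apply Hu; lra.
    intros j Hj. apply HWlip; auto. }
  assert (Hutail : forall t M K, t <= 0 -> (N <= M)%nat -> fsum (fun k => if (k <? M)%nat then 0 else (u t k)^2) K <= (K0 / lam M)^2).
  { intros t M K Ht HMN. destruct (HTV (-t)) as [J HJ].
    apply (Un_cv_le (fun j => fsum (fun k => if (k <? M)%nat then 0 else (V j t k)^2) K) _ _ J).
    apply (fsum_cv (fun j k => if (k <? M)%nat then 0 else (V j t k)^2) (fun k => if (k <? M)%nat then 0 else (u t k)^2)).
    intros k _. destruct (k <? M)%nat. apply Un_cv_const. apply Un_cv_sq. apply Hu; auto.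
    intros j Hj. apply HWtail; auto. specialize (HJ j Hj). lra. }
  assert (Hul2 : forall t, t <= 0 -> l2 (u t)).
  { intros t Ht. refine (proj1 (ser_bound _ (fsum (fun k => (u t k)^2) N + (K0 / lam N)^2) (fun k => pow2_ge_0 _) _)).
    intros K. rewrite (fsum_split _ N K). pose proof (fsum_head (fun k => (u t k)^2) N K (fun k => pow2_ge_0 _)).
    pose proof (Hutail t N K Ht (le_n N)). lra. }
  assert (HMch : forall eps, 0 < eps -> exists M, (N <= M)%nat /\ 4 * (K0 / lam M)^2 < eps^2 / 2).
  { intros eps He. destruct (lam_big (3 * K0 / eps)) as [M0 HM0]. exists (Nat.max N M0). split. lia.
    specialize (HM0 (Nat.max N M0) ltac:(lia)). set (lM := lam (Nat.max N M0)) in *.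
    assert (HlM : 0 < lM) by (unfold lM; apply lam_pos).
    assert (H3 : 3 * K0 < eps * lM).
    { apply (Rmult_lt_compat_l eps) in HM0; auto. replace (eps * (3 * K0 / eps)) with (3 * K0) in HM0 by (field; lra). lra. }
    assert (H4 : K0 / lM < eps / 3).
    { apply (Rmult_lt_reg_r lM); auto. replace (K0 / lM * lM) with K0 by (field; lra). lra. }
    assert (0 <= K0 / lM) by (apply Rdiv_le_0_compat; lra). nra. }
  assert (Hunif : forall T0 eps, 0 <= T0 -> 0 < eps -> exists J, forall j tau, (J <= j)%nat -> - T0 <= tau <= 0 -> vdist (V j tau) (u tau) < eps).
  { intros T0 eps HT0x He. destruct (HMch eps He) as [M [HMN HMe]].
    set (e' := eps / (2 * (INR M + 1))).
    assert (HM1 : 0 < INR M + 1) by (pose proof (pos_INR M); lra).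
    assert (He' : 0 < e') by (unfold e'; apply Rdiv_lt_0_compat; lra).
    destruct (HTV T0) as [J0 HJ0].
    destruct (fin_event (fun k j => forall tau, - T0 <= tau <= 0 -> Rabs (V j tau k - u tau k) < e') M) as [J1 HJ1].
    { intros k Hk.
      assert (G1 : forall j a b, (J0 <= j)%nat -> - T0 <= a <= 0 -> - T0 <= b <= 0 -> Rabs (V j a k - V j b k) <= Lk k T0 * Rabs (a - b)).
      { intros j a b Hj Ha Hb. apply HWlip; auto. }
      assert (G2 : forall a b, - T0 <= a <= 0 -> - T0 <= b <= 0 -> Rabs (u a k - u b k) <= Lk k T0 * Rabs (a - b)).
      { intros a b Ha Hb. apply Hulip; auto. }
      assert (G3 : forall a, - T0 <= a <= 0 -> Un_cv (fun j => V j a k) (u a k)).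
      { intros a Ha. apply Hu. lra. }
      destruct (unif_conv (fun j tau => V j tau k) (fun tau => u tau k) (- T0) 0 (Lk k T0) J0 ltac:(lra) (HLkpos k T0 HT0x) G1 G2 G3 e' He') as [J HJ].
      exists J. intros j Hj tau Htau. apply HJ; auto. }
    exists (Nat.max J0 J1). intros j tau Hj Htau.
    unfold vdist. refine (proj2 (nrm_lt_of_fsum _ (INR M * e'^2 + 4 * (K0 / lam M)^2) eps He _ _)).
    - assert (INR M * e'^2 <= eps^2 / 4).
      { unfold e'. replace (INR M * (eps / (2 * (INR M + 1))) ^ 2) with ((eps^2 / 4) * (INR M / (INR M + 1)) * (/ (INR M + 1))) by (field; lra).
        assert (0 <= INR M / (INR M + 1) <= 1).
        { split. apply Rdiv_le_0_compat. apply pos_INR. lra. apply (Rmult_le_reg_r (INR M + 1)); auto. unfold Rdiv. rewrite Rmult_assoc, Rinv_l by lra. lra. }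
        assert (0 < / (INR M + 1) <= 1).
        { split. apply Rinv_0_lt_compat; auto. rewrite <- Rinv_1. apply Rinv_le_contravar. lra. pose proof (pos_INR M). lra. }
        assert (0 <= eps^2 / 4) by (pose proof (pow2_ge_0 eps); lra). 
        assert ((eps^2 / 4) * (INR M / (INR M + 1)) <= eps^2 / 4) by nra. nra. }
      pose proof (pow2_ge_0 eps). lra.
    - intros K. eapply Rle_trans. apply (eqc_bound (V j tau) (u tau) (fun _ => e') M ((K0 / lam M)^2) K).
      + intros k Hk. left. apply HJ1; auto; lia.
      + apply HWtail; auto. pose proof (HJ0 j ltac:(lia)). lra.
      + apply Hutail; auto; lra.
      + cbv beta. rewrite fsum_const. lra. }
  assert (Hucont : forall t, t <= 0 -> forall eps, 0 < eps -> exists delta, 0 < delta /\ forall s, s <= 0 -> Rabs (s - t) < delta -> vdist (u s) (u t) < eps).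
  { intros t Ht eps He. destruct (HMch eps He) as [M [HMN HMe]]. set (T0 := - t + 1).
    set (S := fsum (fun k => (Lk k T0)^2) M).
    assert (HS : 0 <= S) by (apply fsum_nonneg; intros; apply pow2_ge_0).
    set (delta := Rmin 1 (eps / (2 * (S + 1)))).
    assert (Hd0 : 0 < delta). { unfold delta. apply Rmin_glb_lt. lra. apply Rdiv_lt_0_compat; lra. }
    assert (Hd1 : delta <= 1) by apply Rmin_l.
    assert (Hd2 : delta <= eps / (2 * (S + 1))) by apply Rmin_r.
    exists delta. split; auto. intros s Hs Hst.
    unfold vdist. refine (proj2 (nrm_lt_of_fsum _ (S * delta^2 + 4 * (K0/lam M)^2) eps He _ _)).
    - assert (S * delta^2 <= eps^2 / 4).
      { assert (S * delta <= eps / 2).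
        { apply Rle_trans with (S * (eps / (2 * (S + 1)))). apply Rmult_le_compat_l; auto.
          replace (S * (eps / (2 * (S + 1)))) with ((eps / 2) * (S / (S + 1))) by (field; lra).
          assert (S / (S + 1) <= 1). { apply (Rmult_le_reg_r (S + 1)). lra. unfold Rdiv. rewrite Rmult_assoc, Rinv_l by lra. lra. }
          nra. }
        assert (delta <= eps / 2). { apply Rle_trans with (eps / (2 * (S + 1))); auto.
          unfold Rdiv. apply Rmult_le_compat_l. lra. apply Rinv_le_contravar; lra. }
        nra. }
      pose proof (pow2_ge_0 eps). lra.
    - intros K. eapply Rle_trans. apply (eqc_bound (u s) (u t) (fun k => Lk k T0 * delta) M ((K0/lam M)^2) K).
      + intros k Hk. eapply Rle_trans. rewrite Rabs_minus_sym. apply (Hulip k T0 s t).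
        apply Rabs_lt_between in Hst. unfold T0. lra. unfold T0. lra.
        apply Rmult_le_compat_l. apply HLkpos. unfold T0; lra. rewrite Rabs_minus_sym. lra.
      + apply Hutail; auto.
      + apply Hutail; auto.
      + right. f_equal. unfold S. rewrite Rmult_comm, <- fsum_scal. apply fsum_ext. intros; ring. }
  assert (Hucont' : H_continuous_on (fun s => s <= 0) u).
  { split. intros; apply Hul2; auto. intros t Ht eps He. destruct (Hucont t Ht eps He) as [d [Hd H]]. exists d. split; auto. }
  assert (Hform : forall s t k, s <= 0 -> t <= 0 -> s <= t ->
    u t k = exp (- lam k * (t - s)) * u s k + RInt (fun tau => exp (- lam k * (t - tau)) * F (u tau) k) s t).
  { intros s t k Hs Ht Hst.
    set (I := fun j => RInt (fun tau => exp (- lam k * (t - tau)) * F (V j tau) k) s t).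
    set (I0 := RInt (fun tau => exp (- lam k * (t - tau)) * F (u tau) k) s t).
    destruct (HTV (-s)) as [J0 HJ0].
    assert (Hus : H_continuous_on (fun x => s <= x <= t) u). { apply (hcont_sub (fun s => s <= 0)); auto. intros; lra. }
    assert (E1 : Un_cv I (u t k - exp (- lam k * (t - s)) * u s k)).
    { apply (Un_cv_event (fun j => V j t k - exp (- lam k * (t - s)) * V j s k) _ _ J0).
      - intros j Hj. unfold I, V. specialize (HJ0 j Hj).
        rewrite (mild_formula _ _ _ (HW (phi j)) s t k) by lra. ring.
      - apply CV_minus. apply Hu; lra. apply CV_mult. apply Un_cv_const. apply Hu; lra. }
    assert (E2 : Un_cv I I0).
    { intros eps He.
      set (e' := eps / ((t - s + 1) * (K1 + 1))).
      assert (He' : 0 < e') by (unfold e'; apply Rdiv_lt_0_compat; nra).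
      destruct (Hunif (-s) e' ltac:(lra) He') as [J1 HJ1].
      exists (Nat.max J0 J1). intros j Hj. unfold Rdist, I, I0.
      specialize (HJ0 j ltac:(lia)).
      assert (EV : ex_RInt (fun tau => exp (- lam k * (t - tau)) * F (V j tau) k) s t).
      { apply (mild_int _ _ _ (HW (phi j))); lra. }
      assert (EU : ex_RInt (fun tau => exp (- lam k * (t - tau)) * F (u tau) k) s t).
      { apply (hcont_int s t u k (lam k) s t Hus); lra. }
      rewrite <- RInt_minusR by auto.
      eapply Rle_lt_trans. apply (abs_RInt_le_const _ s t (K1 * e')). lra. apply ex_RInt_minusR; auto.
      + intros tau Htau. rewrite <- Rmult_minus_distr_l, Rabs_mult, Rabs_pos_eq by (left; apply exp_pos).
        pose proof (lam_pos k).
        assert (exp (- lam k * (t - tau)) <= 1). { rewrite <- exp_0. apply exp_mono. nra. }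
        assert (Hl2V : l2 (V j tau)). { apply (mild_l2 _ _ _ (HW (phi j))). lra. }
        assert (Hl2u : l2 (u tau)). { apply Hul2. lra. }
        pose proof (Fcoord_lip (V j tau) (u tau) k Hl2V Hl2u).
        pose proof (HJ1 j tau ltac:(lia) ltac:(lra)).
        pose proof (Rabs_pos (F (V j tau) k - F (u tau) k)).
        pose proof (exp_pos (- lam k * (t - tau))).
        assert (K1 * vdist (V j tau) (u tau) <= K1 * e') by (apply Rmult_le_compat_l; lra).
        nra.
      + unfold e'. replace ((t - s) * (K1 * (eps / ((t - s + 1) * (K1 + 1))))) with (eps * ((t - s) / (t - s + 1)) * (K1 / (K1 + 1))) by (field; nra).
        assert (0 <= (t - s) / (t - s + 1) < 1).
        { split. apply Rdiv_le_0_compat; lra. apply (Rmult_lt_reg_r (t - s + 1)). lra. unfold Rdiv. rewrite Rmult_assoc, Rinv_l by lra. lra. }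
        assert (0 <= K1 / (K1 + 1) < 1).
        { split. apply Rdiv_le_0_compat; lra. apply (Rmult_lt_reg_r (K1 + 1)). lra. unfold Rdiv. rewrite Rmult_assoc, Rinv_l by lra. lra. }
        assert (eps * ((t - s) / (t - s + 1)) <= eps) by nra. nra. }
    pose proof (UL_sequence _ _ _ E1 E2) as HE. lra. }
  assert (Hu0 : u 0 = x).
  { apply functional_extensionality. intros k. apply (UL_sequence (fun j => V j 0 k)). apply Hu; lra.
    apply (Un_cv_event (fun j => xs (phi j) k) _ _ O). { intros j _. unfold V. rewrite HW0. reflexivity. }
    apply (Un_cv_sub (fun j => xs j k)). apply sincr_ge; auto.
    intros eps He. destruct (Hlim' eps He) as [N0 HN0]. exists N0. intros j Hj. specialize (HN0 j Hj). unfold Rdist in *.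
    rewrite Rminus_0_r, Rabs_pos_eq in HN0 by apply nrm_nonneg. eapply Rle_lt_trans. apply coord_le_vdist; auto. auto. }
  exists u. split. split. exact Hucont'. intros s t Hs Ht Hst k. apply Hform; auto. split. exact Hu0.
  exists (K0 / lam N). intros t Ht. refine (proj2 (nrm_le_of_fsum _ (K0 / lam N) _ _)). apply Rdiv_le_0_compat; [lra | apply lam_pos].
  intros K. eapply Rle_trans; [|apply (Hutail t N K Ht (le_n N))]. right. apply fsum_ext. intros k _. unfold Qproj. destruct (k <? N)%nat; ring.
Qed.
End Est.


Theorem theorem4p1
  (lam : nat -> R) (N : nat) (F : vec -> vec) (K0 K1 Rad : R)
  (hlam0 : 0 < lam 0%nat)
  (hlam01 : lam 0%nat < lam 1%nat)
  (hlam_mono : forall k, lam k <= lam (S k))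
  (hlam_inf : is_lim_seq lam p_infty)
  (hN : (1 <= N)%nat)
  (hgap : lam (pred N) < lam N)
  (hK0 : 0 < K0) (hK1 : 0 < K1) (hK1gap : K1 < lam N)
  (hFl2 : forall v, l2 v -> l2 (F v))
  (hFbnd : forall v, l2 v -> nrm (F v) <= K0)
  (hFlip : forall v w, l2 v -> l2 w -> vdist (F v) (F w) <= K1 * vdist v w)
  (hRad : 0 < Rad)
  (hFsupp : forall v, l2 v -> Rad <= nrm v -> F v = (fun _ => 0)) :
  forall x, M_inf lam F N x -> M_minf lam F N x.
Proof.
  exact (main_incl lam F K0 K1 N hlam0 hlam_mono hK0 hK1 hFl2 hFbnd hFlip hlam_inf).
Qed.
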